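(* Let $p(x,y)=\sum_{i,j\ge0}a_{i,j}x^iy^j$ be a polynomial in two variables with coefficients in a commutative ring (with $a_{i,j}=0$ if $i<0$ or $j<0$). For an integer $k\ge 0$ define $$I_k(p(x,y))=\sum_{i=0}^{k}\sum_{j=0}^{k-i}(-1)^j\binom{k-i}{j}a_{i,j}.$$ Then: (1) $I_k(x^m p(x,y))=I_{k-m}(p(x,y))$ for all integers $0\le m\le k$; (2) $I_k(y\,p(x,y))=-\sum_{s=0}^{k-1}I_s(p(x,y))$. *)

(* Defs.v *)
(* Bivariate polynomials p(x,y) are represented as
   p : {poly {poly R}}, with the OUTER variable 'X playing the role of x
   and the inner variable (('X : {poly R})%:P) playing the role of y, so
   a_{i,j} = (p`_i)`_j is the coefficient of x^i y^j. *)
From mathcomp Require Import all_boot all_order all_algebra.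
Set Implicit Arguments. Unset Strict Implicit. Unset Printing Implicit Defensive.
Import GRing.Theory.
Local Open Scope ring_scope.

Definition bcoef (R : comNzRingType) (p : {poly {poly R}}) (i j : nat) : R :=
  (p`_i)`_j.

Definition yvar (R : comNzRingType) : {poly {poly R}} := ('X : {poly R})%:P.

Definition Ik (R : comNzRingType) (k : nat) (p : {poly {poly R}}) : R :=
  \sum_(i < k.+1) \sum_(j < (k - i).+1)
     (-1) ^+ j * ('C(k - i, j))%:R * bcoef p i j.

(* Main.v *)
Require Import Defs.
From mathcomp Require Import all_boot all_order all_algebra.
From mathcomp Require Import zify.
Import GRing.Theory.
Local Open Scope ring_scope.

Section Aux.
Variable R : comNzRingType.

Definition cc (k i j : nat) : R :=
  if (i <= k)%N then (-1) ^+ j * ('C(k - i, j))%:R else 0.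

Lemma IkE k N (p : {poly {poly R}}) : (k < N)%N ->
  Ik k p = \sum_(i < N) \sum_(j < N) cc k i j * bcoef p i j.
Proof.
move=> H; rewrite /Ik (big_ord_widen N (fun i : nat => \sum_(j < (k - i).+1) (-1) ^+ j * ('C(k - i, j))%:R * bcoef p i j) H) big_mkcond /=.
apply: eq_bigr => i _; case: ifP => hik.
  have H2 : ((k - i).+1 <= N)%N by lia.
  rewrite (big_ord_widen N (fun j : nat => (-1) ^+ j * ('C(k - i, j))%:R * bcoef p i j) H2) big_mkcond /=; apply: eq_bigr => j _.
  rewrite /cc (_ : (i <= k)%N = true); last by lia.
  case: ifP => // hj; rewrite bin_small ?mulr0 ?mul0r //; lia.
rewrite big1 // => j _; rewrite /cc ifF ?mul0r //; lia.
Qed.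

Lemma IkX k (q : {poly {poly R}}) : Ik k.+1 ('X * q) = Ik k q.
Proof.
rewrite /Ik big_ord_recl /= big1 => [|j _]; last first.
  by rewrite /bcoef coefXM /= coef0 mulr0.
rewrite add0r; apply: eq_bigr => i _.
rewrite subSS; apply: eq_bigr => j _.
by rewrite /bcoef coefXM /=.
Qed.

Lemma hockey i j k : (\sum_(s < k | (i <= s)%N) 'C(s - i, j) = 'C(k - i, j.+1))%N.
Proof.
elim: k => [|k IH]; first by rewrite big_ord0 sub0n bin0n.
rewrite big_mkcond big_ord_recr /= -big_mkcond IH.
case: (leqP i k) => h.
  by rewrite subSn // binS.
rewrite addn0 (_ : (k.+1 - i = 0)%N); last by lia.
by rewrite (_ : (k - i = 0)%N) ?bin0n //; lia.
Qed.

Lemma key k i j : cc k i j.+1 = - \sum_(s < k) cc s i j.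
Proof.
rewrite /cc -big_mkcond /= -mulr_sumr -natr_sum hockey.
case: ifP => h; first by rewrite exprS mulN1r mulNr.
by rewrite (_ : (k - i = 0)%N) ?bin0n ?mulr0 ?oppr0 //; lia.
Qed.

End Aux.

Theorem lemma3p2 (R : comNzRingType) (p : {poly {poly R}}) :
  (forall m k : nat, (m <= k)%N -> Ik k ('X ^+ m * p) = Ik (k - m) p) /\
  (forall k : nat, Ik k (yvar R * p) = - \sum_(s < k) Ik s p).
Proof.
split.
  elim=> [|m IH] k hk; first by rewrite expr0 mul1r subn0.
  case: k hk => // k hk.
  by rewrite exprS -mulrA IkX IH // subSS.
move=> k.
rewrite (@IkE R k k.+2) //.
have -> : \sum_(s < k) Ik s p = \sum_(s < k) \sum_(i<k.+2)\sum_(j<k.+2) cc R s i j * bcoef p i j.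
  apply: eq_bigr; move=> s _; apply: IkE; have := ltn_ord s; lia.
have -> : \sum_(s<k) \sum_(i<k.+2)\sum_(j<k.+2) cc R s i j * bcoef p i j = \sum_(i<k.+2)\sum_(j<k.+2) (\sum_(s<k) cc R s i j) * bcoef p i j.
  rewrite exchange_big; apply: eq_bigr => i _.
  rewrite exchange_big; apply: eq_bigr => j _.
  by rewrite mulr_suml.
rewrite -sumrN; apply: eq_bigr => i _; rewrite -sumrN.
rewrite big_ord_recl /bcoef /yvar coefCM coefXM /= mulr0 add0r.
under [RHS]eq_bigr => j _ do rewrite -mulNr -key.
rewrite [RHS]big_ord_recr /=.
rewrite [cc R k i k.+2]/cc bin_small; last by lia.
rewrite mulr0 if_same mul0r addr0.
apply: eq_bigr => j _; rewrite /bump /= add1n coefXM.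
by [].
Qed.
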